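(* Under the hypotheses of the infinite horizon dynamic programming lemma (time-invariant UMCO channel on finite alphabets; there exist $V:\mathbb B\to\mathbb R$ and $J^*\in\mathbb R$ with $\lim_{t\to\infty}(\widetilde V_t(b)-tJ^* )=V(b)$ for all $b$, and $(V,J^* )$ solves the average-reward dynamic programming equation), a time-invariant channel input distribution $\{\pi^\infty(a_0|b_{-1}):b_{-1}\in\mathbb B\}$ achieves the supremum in the dynamic programming equation if and only if there exist $\{V(b_{-1}):b_{-1}\in\mathbb B\}$ such that $$J^*+V(b_{-1})=\sum_{b_0}\Big(\log\frac{\mathbf P(b_0|b_{-1},a_0)}{\mathbf P^{\pi^\infty}(b_0|b_{-1})}+V(b_0)\Big)\mathbf P(b_0|b_{-1},a_0)\quad\forall a_0\text{ with }\pi^\infty(a_0|b_{-1})\ne0,$$ $$J^*+V(b_{-1})\le\sum_{b_0}\Big(\log\frac{\mathbf P(b_0|b_{-1},a_0)}{\mathbf P^{\pi^\infty}(b_0|b_{-1})}+V(b_0)\Big)\mathbf P(b_0|b_{-1},a_0)\quad\forall a_0\text{ with }\pi^\infty(a_0|b_{-1})=0.$$ Moreover, $V$ is then the relative value function solving the dynamic programming equation.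
   Context: Time-invariant UMCO channel $\mathbf P(b_i|b_{i-1},a_i)$ on finite alphabets; $\mathbf P^{\pi}(b_0|b_{-1})=\sum_a\mathbf P(b_0|b_{-1},a)\pi(a|b_{-1})$. $\widetilde V_0\equiv0$, $\widetilde V_t(b_{-1})=\sup_{\pi(\cdot|b_{-1})}\sum_{a_0}\{\sum_{b_0}\log\frac{\mathbf P(b_0|b_{-1},a_0)}{\mathbf P^\pi(b_0|b_{-1})}\mathbf P(b_0|b_{-1},a_0)+\sum_{b_0}\widetilde V_{t-1}(b_0)\mathbf P(b_0|b_{-1},a_0)\}\pi(a_0|b_{-1})$. The dynamic programming equation is $J^*+V(b_{-1})=\sup_{\pi(\cdot|b_{-1})}\sum_{a_0}\{\sum_{b_0}\log\frac{\mathbf P(b_0|b_{-1},a_0)}{\mathbf P^\pi(b_0|b_{-1})}\mathbf P(b_0|b_{-1},a_0)+\sum_{b_0}V(b_0)\mathbf P(b_0|b_{-1},a_0)\}\pi(a_0|b_{-1})$. *)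

(* Defs.v *)
From Stdlib Require Import Reals List.
Import ListNotations.
Open Scope R_scope.

(* Finite alphabets: A = {0,...,nA-1}, B = {0,...,nB-1}. *)

Definition Rsum (n : nat) (f : nat -> R) : R :=
  fold_right Rplus 0 (map f (seq 0 n)).

(* A channel P(b0 | b_{-1}, a) is encoded as  P b0 bprev a. *)
Definition is_channel (nA nB : nat) (P : nat -> nat -> nat -> R) : Prop :=
  forall bprev a, (bprev < nB)%nat -> (a < nA)%nat ->
    (forall b0, (b0 < nB)%nat -> 0 <= P b0 bprev a) /\
    Rsum nB (fun b0 => P b0 bprev a) = 1.

Definition is_dist (nA : nat) (p : nat -> R) : Prop :=
  (forall a, (a < nA)%nat -> 0 <= p a) /\ Rsum nA p = 1.

Definition Pmix (nA : nat) (P : nat -> nat -> nat -> R) (p : nat -> R)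
  (bprev b0 : nat) : R :=
  Rsum nA (fun a => P b0 bprev a * p a).

(* The term  p * log (p / q)  with convention 0 log (0/q) = 0. *)
Definition klterm (p q : R) : R :=
  if Rlt_dec 0 p then p * ln (p / q) else 0.

Definition Qval (nA nB : nat) (P : nat -> nat -> nat -> R) (p : nat -> R)
  (W : nat -> R) (bprev a : nat) : R :=
  Rsum nB (fun b0 => klterm (P b0 bprev a) (Pmix nA P p bprev b0)
                     + W b0 * P b0 bprev a).

(* Finiteness of the divergence term for action a: whenever P(b0|bprev,a) > 0,
   P^p(b0|bprev) > 0 (otherwise Qval is +infinity). *)
Definition Qfinite (nA nB : nat) (P : nat -> nat -> nat -> R) (p : nat -> R)
  (bprev a : nat) : Prop :=
  forall b0, (b0 < nB)%nat -> 0 < P b0 bprev a -> 0 < Pmix nA P p bprev b0.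

Definition objective (nA nB : nat) (P : nat -> nat -> nat -> R) (W : nat -> R)
  (p : nat -> R) (bprev : nat) : R :=
  Rsum nA (fun a => p a *
     (Rsum nB (fun b0 => klterm (P b0 bprev a) (Pmix nA P p bprev b0))
      + Rsum nB (fun b0 => W b0 * P b0 bprev a))).

Definition obj_values (nA nB : nat) (P : nat -> nat -> nat -> R) (W : nat -> R)
  (bprev : nat) : R -> Prop :=
  fun r => exists p, is_dist nA p /\ r = objective nA nB P W p bprev.

Definition is_finite_horizon_values (nA nB : nat) (P : nat -> nat -> nat -> R)
  (Vt : nat -> nat -> R) : Prop :=
  (forall b, Vt O b = 0) /\
  (forall t b, (b < nB)%nat -> is_lub (obj_values nA nB P (Vt t) b) (Vt (S t) b)).

Definition solves_DP (nA nB : nat) (P : nat -> nat -> nat -> R) (J : R)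
  (W : nat -> R) : Prop :=
  forall b, (b < nB)%nat -> is_lub (obj_values nA nB P W b) (J + W b).

(* A time-invariant input distribution pinf(a | bprev) = pinf a bprev. *)
Definition is_policy (nA nB : nat) (pinf : nat -> nat -> R) : Prop :=
  forall b, (b < nB)%nat -> is_dist nA (fun a => pinf a b).

Definition attains (nA nB : nat) (P : nat -> nat -> nat -> R) (J : R)
  (W : nat -> R) (pinf : nat -> nat -> R) : Prop :=
  forall b, (b < nB)%nat -> objective nA nB P W (fun a => pinf a b) b = J + W b.

Definition KKT (nA nB : nat) (P : nat -> nat -> nat -> R) (J : R)
  (W : nat -> R) (pinf : nat -> nat -> R) : Prop :=
  forall b a, (b < nB)%nat -> (a < nA)%nat ->
    (pinf a b <> 0 -> J + W b = Qval nA nB P (fun a' => pinf a' b) W b a) /\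
    (pinf a b = 0 ->
       Qfinite nA nB P (fun a' => pinf a' b) b a /\
       Qval nA nB P (fun a' => pinf a' b) W b a <= J + W b).

(* Main.v *)
Require Import Defs.
From Stdlib Require Import Reals Lra List Lia.
Import ListNotations.
Open Scope R_scope.

Lemma fold_plus_acc (l : list R) (x : R) :
  fold_right Rplus x l = fold_right Rplus 0 l + x.
Proof. induction l as [|y l IH]; simpl; [lra| rewrite IH; lra]. Qed.

Lemma Rsum_0 f : Rsum 0 f = 0.
Proof. reflexivity. Qed.

Lemma Rsum_S n f : Rsum (S n) f = Rsum n f + f n.
Proof.
  unfold Rsum. rewrite seq_S, map_app, fold_right_app. simpl.
  rewrite fold_plus_acc. lra.
Qed.

Lemma Rsum_ext n f g : (forall i, (i < n)%nat -> f i = g i) -> Rsum n f = Rsum n g.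
Proof.
  induction n as [|n IH]; intros H; [reflexivity|].
  rewrite !Rsum_S, IH by (intros; apply H; lia). rewrite (H n) by lia. reflexivity.
Qed.

Lemma Rsum_le n f g : (forall i, (i < n)%nat -> f i <= g i) -> Rsum n f <= Rsum n g.
Proof.
  induction n as [|n IH]; intros H; [rewrite !Rsum_0; lra|].
  rewrite !Rsum_S. assert (Rsum n f <= Rsum n g) by (apply IH; intros; apply H; lia).
  assert (f n <= g n) by (apply H; lia). lra.
Qed.

Lemma Rsum_plus n f g : Rsum n (fun i => f i + g i) = Rsum n f + Rsum n g.
Proof. induction n as [|n IH]; [rewrite !Rsum_0; lra| rewrite !Rsum_S, IH; lra]. Qed.

Lemma Rsum_minus n f g : Rsum n (fun i => f i - g i) = Rsum n f - Rsum n g.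
Proof. induction n as [|n IH]; [rewrite !Rsum_0; lra| rewrite !Rsum_S, IH; lra]. Qed.

Lemma Rsum_scal n c f : Rsum n (fun i => c * f i) = c * Rsum n f.
Proof. induction n as [|n IH]; [rewrite !Rsum_0; lra| rewrite !Rsum_S, IH; lra]. Qed.

Lemma Rsum_const0 n : Rsum n (fun _ => 0) = 0.
Proof. induction n as [|n IH]; [reflexivity| rewrite Rsum_S, IH; lra]. Qed.

Lemma Rsum_swap n m (f : nat -> nat -> R) :
  Rsum n (fun i => Rsum m (fun j => f i j)) = Rsum m (fun j => Rsum n (fun i => f i j)).
Proof.
  induction n as [|n IH].
  - rewrite Rsum_0. symmetry. apply Rsum_const0.
  - rewrite Rsum_S, IH. rewrite <- Rsum_plus. apply Rsum_ext. intros. rewrite Rsum_S. reflexivity.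
Qed.

Lemma Rsum_nonneg n f : (forall i, (i < n)%nat -> 0 <= f i) -> 0 <= Rsum n f.
Proof.
  intros H. rewrite <- (Rsum_const0 n). apply Rsum_le. exact H.
Qed.

Lemma Rsum_term_le n f k : (forall i, (i < n)%nat -> 0 <= f i) -> (k < n)%nat -> f k <= Rsum n f.
Proof.
  induction n as [|n IH]; intros H Hk; [lia|].
  rewrite Rsum_S. destruct (Nat.eq_dec k n) as [->|Hne].
  - assert (0 <= Rsum n f) by (apply Rsum_nonneg; intros; apply H; lia). lra.
  - assert (f k <= Rsum n f) by (apply IH; [intros; apply H; lia| lia]).
    assert (0 <= f n) by (apply H; lia). lra.
Qed.

Lemma Rsum_delta n k (f : nat -> R) : (k < n)%nat ->
  Rsum n (fun i => if Nat.eqb i k then f i else 0) = f k.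
Proof.
  induction n as [|n IH]; intros Hk; [lia|].
  rewrite Rsum_S. destruct (Nat.eq_dec k n) as [->|Hne].
  - rewrite Nat.eqb_refl.
    rewrite (Rsum_ext n _ (fun _ => 0)). rewrite Rsum_const0. lra.
    intros i Hi. destruct (Nat.eqb_spec i n); [lia|reflexivity].
  - rewrite IH by lia. destruct (Nat.eqb_spec n k); [lia|lra].
Qed.

Lemma ln_le_sub1 x : 0 < x -> ln x <= x - 1.
Proof. intros Hx. pose proof (exp_ineq1_le (ln x)). rewrite exp_ln in H by exact Hx. lra. Qed.

Lemma ln_div' x y : 0 < x -> 0 < y -> ln (x / y) = ln x - ln y.
Proof. intros. unfold Rdiv. rewrite ln_mult, ln_Rinv; try lra. apply Rinv_0_lt_compat; lra. Qed.

Lemma ln_0 : ln 0 = 0.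
Proof. unfold ln. case (Rlt_dec 0 0); intros; [exfalso; lra|reflexivity]. Qed.

Lemma klterm_0 q : klterm 0 q = 0.
Proof. unfold klterm. destruct (Rlt_dec 0 0); [lra|reflexivity]. Qed.

Lemma klterm_pos p q : 0 < p -> klterm p q = p * ln (p / q).
Proof. intros. unfold klterm. destruct (Rlt_dec 0 p); [reflexivity|lra]. Qed.

Lemma Rinv_nonneg x : 0 <= x -> 0 <= / x.
Proof. intros [H|H]. left; apply Rinv_0_lt_compat; lra. subst; rewrite Rinv_0; lra. Qed.

Lemma Pmix_nonneg nA nB P p b b0 : is_channel nA nB P -> is_dist nA p ->
  (b < nB)%nat -> (b0 < nB)%nat -> 0 <= Pmix nA P p b b0.
Proof.
  intros HP [Hp _] Hb Hb0. unfold Pmix. apply Rsum_nonneg. intros a Ha.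
  destruct (HP b a Hb Ha) as [H1 _]. specialize (H1 b0 Hb0). specialize (Hp a Ha). nra.
Qed.

Lemma Pmix_term nA nB P p b b0 a : is_channel nA nB P -> is_dist nA p ->
  (b < nB)%nat -> (b0 < nB)%nat -> (a < nA)%nat -> P b0 b a * p a <= Pmix nA P p b b0.
Proof.
  intros HP [Hp _] Hb Hb0 Ha. unfold Pmix.
  apply (Rsum_term_le nA (fun a => P b0 b a * p a)); [|exact Ha]. intros a' Ha'.
  destruct (HP b a' Hb Ha') as [H1 _]. specialize (H1 b0 Hb0). specialize (Hp a' Ha'). nra.
Qed.

Lemma Pmix_sum nA nB P p b : is_channel nA nB P -> is_dist nA p -> (b < nB)%nat ->
  Rsum nB (fun b0 => Pmix nA P p b b0) = 1.
Proof.
  intros HP [_ Hs] Hb. unfold Pmix.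
  rewrite <- (Rsum_swap nA nB (fun a b0 => P b0 b a * p a)).
  rewrite <- Hs. apply Rsum_ext. intros a Ha.
  rewrite (Rsum_ext nB _ (fun b0 => p a * P b0 b a)) by (intros; ring).
  rewrite Rsum_scal. destruct (HP b a Hb Ha) as [_ ->]. ring.
Qed.

Lemma objective_Qval nA nB P W p b :
  objective nA nB P W p b = Rsum nA (fun a => p a * Qval nA nB P p W b a).
Proof.
  unfold objective, Qval. apply Rsum_ext. intros a _. rewrite Rsum_plus. reflexivity.
Qed.

Lemma gibbs_pt s Pv Pp Pq : 0 <= s -> 0 <= Pv ->
  (0 < s -> 0 < Pv -> 0 < Pp) -> (0 < s -> 0 < Pv -> s * Pv <= Pq) ->
  s * klterm Pv Pq <= s * klterm Pv Pp + s * Pv * (Pp / Pq - 1).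
Proof.
  intros Hs HPv H1 H2.
  destruct Hs as [Hs|Hs]; [|subst; lra].
  destruct HPv as [HPv|HPv]; [|subst; rewrite !klterm_0; lra].
  specialize (H1 Hs HPv). specialize (H2 Hs HPv).
  assert (Hq : 0 < Pq) by nra.
  rewrite !klterm_pos by exact HPv.
  rewrite !ln_div' by lra.
  pose proof (ln_le_sub1 (Pp / Pq)) as Hl.
  rewrite ln_div' in Hl by lra.
  assert (0 < Pp / Pq) by (apply Rdiv_lt_0_compat; lra).
  specialize (Hl H). assert (0 < s * Pv) by nra. nra.
Qed.

Lemma upper_bound nA nB P W p q b M : is_channel nA nB P -> (b < nB)%nat ->
  is_dist nA p -> is_dist nA q ->
  (forall a, (a < nA)%nat -> p a = 0 -> Qfinite nA nB P p b a) ->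
  (forall a, (a < nA)%nat -> Qval nA nB P p W b a <= M) ->
  objective nA nB P W q b <= M.
Proof.
  intros HP Hb Hp Hq Hfin HQ.
  set (Pp := fun b0 => Pmix nA P p b b0).
  set (Pq := fun b0 => Pmix nA P q b b0).
  set (g := fun b0 => Pp b0 / Pq b0 - 1).
  apply Rle_trans with
    (Rsum nA (fun a => q a * Qval nA nB P p W b a + Rsum nB (fun b0 => q a * P b0 b a * g b0))).
  - unfold objective. apply Rsum_le. intros a Ha.
    unfold Qval. rewrite Rsum_plus.
    rewrite Rmult_plus_distr_l, Rmult_plus_distr_l.
    rewrite <- !Rsum_scal.
    cut (Rsum nB (fun i => q a * klterm (P i b a) (Pmix nA P q b i)) <=
         Rsum nB (fun i => q a * klterm (P i b a) (Pmix nA P p b i) + q a * P i b a * g i)).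
    { rewrite Rsum_plus. intros. lra. }
    apply Rsum_le. intros b0 Hb0.
    destruct (HP b a Hb Ha) as [HP1 _]. pose proof Hq as [Hq0 Hq1]. pose proof Hp as [Hp0 Hp1].
    apply gibbs_pt.
    + apply Hq0; exact Ha.
    + apply HP1; exact Hb0.
    + intros Hqa HPa. destruct (Rle_lt_or_eq_dec 0 (p a) (Hp0 a Ha)) as [Hpa|Hpa].
      * pose proof (Pmix_term nA nB P p b b0 a HP (conj Hp0 Hp1) Hb Hb0 Ha). nra.
      * apply (Hfin a Ha (eq_sym Hpa) b0 Hb0 HPa).
    + intros. pose proof (Pmix_term nA nB P q b b0 a HP Hq Hb Hb0 Ha). lra.
  - rewrite Rsum_plus.
    rewrite (Rsum_swap nA nB (fun a b0 => q a * P b0 b a * g b0)).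
    assert (Hg : Rsum nB (fun b0 => Rsum nA (fun a => q a * P b0 b a * g b0)) <= 0).
    { apply Rle_trans with (Rsum nB (fun b0 => Pp b0 - Pq b0)).
      - apply Rsum_le. intros b0 Hb0.
        rewrite (Rsum_ext nA _ (fun a => g b0 * (P b0 b a * q a))) by (intros; ring).
        rewrite Rsum_scal. fold (Pmix nA P q b b0). fold (Pq b0).
        pose proof (Pmix_nonneg nA nB P q b b0 HP Hq Hb Hb0).
        pose proof (Pmix_nonneg nA nB P p b b0 HP Hp Hb Hb0).
        fold Pq in H. fold Pp in H0.
        unfold g; unfold Pq, Pp in *. destruct H as [H|H].
        + right. assert (Pmix nA P q b b0 <> 0) by lra. field. exact H1.
        + rewrite <- H. lra.
      - rewrite Rsum_minus. unfold Pp, Pq. rewrite !Pmix_sum by assumption. lra. }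
    assert (Rsum nA (fun a => q a * Qval nA nB P p W b a) <= Rsum nA (fun a => q a * M)).
    { apply Rsum_le. intros a Ha. apply Rmult_le_compat_l. apply (proj1 Hq a Ha). apply HQ, Ha. }
    rewrite (Rsum_ext nA (fun a => q a * M) (fun a => M * q a)) in H by (intros; ring).
    rewrite Rsum_scal, (proj2 Hq) in H. lra.
Qed.

Lemma kkt_implies nA nB P J W pinf : is_channel nA nB P -> is_policy nA nB pinf ->
  KKT nA nB P J W pinf -> solves_DP nA nB P J W /\ attains nA nB P J W pinf.
Proof.
  intros HP Hpol HK.
  assert (Hatt : attains nA nB P J W pinf).
  { intros b Hb. rewrite objective_Qval.
    destruct (Hpol b Hb) as [Hp0 Hp1].
    rewrite (Rsum_ext nA _ (fun a => (J + W b) * pinf a b)).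
    - rewrite Rsum_scal, Hp1. ring.
    - intros a Ha. destruct (Req_dec (pinf a b) 0) as [E|E].
      + rewrite E. ring.
      + destruct (HK b a Hb Ha) as [H1 _]. rewrite <- (H1 E). ring. }
  split; [|exact Hatt].
  intros b Hb. split.
  - intros r [q [Hq ->]].
    apply (upper_bound nA nB P W (fun a => pinf a b) q b); auto.
    + intros a Ha E. apply (proj2 (HK b a Hb Ha) E).
    + intros a Ha. destruct (Req_dec (pinf a b) 0) as [E|E].
      * apply (proj2 (HK b a Hb Ha) E).
      * rewrite <- (proj1 (HK b a Hb Ha) E). lra.
  - intros ub Hub. rewrite <- (Hatt b Hb). apply Hub.
    exists (fun a => pinf a b). split; [apply Hpol, Hb| reflexivity].
Qed.

Lemma pert_i s Pv Pp Pa Pq eps : 0 <= s -> 0 <= Pv -> 0 < eps < 1 -> 0 <= Pa ->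
  (0 < s -> 0 < Pv -> s * Pv <= Pp) -> Pq = (1 - eps) * Pp + eps * Pa ->
  s * klterm Pv Pp - eps * (s * Pv * ((Pa - Pp) / Pp)) <= s * klterm Pv Pq.
Proof.
  intros Hs HPv He HPa H1 HPq.
  destruct Hs as [Hs|Hs]; [|subst; lra].
  destruct HPv as [HPv|HPv]; [|subst; rewrite !klterm_0; lra].
  specialize (H1 Hs HPv).
  assert (Hp : 0 < Pp) by nra.
  assert (Hq : 0 < Pq) by nra.
  rewrite !klterm_pos by exact HPv.
  rewrite !ln_div' by lra.
  assert (Hd : 0 < Pq / Pp) by (apply Rdiv_lt_0_compat; lra).
  pose proof (ln_le_sub1 _ Hd) as Hl. rewrite ln_div' in Hl by lra.
  assert (E : Pq / Pp - 1 = eps * ((Pa - Pp) / Pp)) by (rewrite HPq; field; lra).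
  rewrite E in Hl.
  assert (0 < s * Pv) by nra.
  assert (s * Pv * (ln Pq - ln Pp) <= s * Pv * (eps * ((Pa - Pp) / Pp))) by
    (apply Rmult_le_compat_l; lra).
  nra.
Qed.

Lemma pert_ii Pa Pp Pq eps : 0 <= Pa -> 0 <= Pp -> 0 < eps < 1 ->
  Pq = (1 - eps) * Pp + eps * Pa ->
  klterm Pa Pp - eps * (Pa * Pa / Pp) - ln eps * (if Rlt_dec 0 Pp then 0 else Pa)
    <= klterm Pa Pq.
Proof.
  intros HPa HPp He HPq.
  destruct HPa as [HPa|HPa]; [|subst; rewrite !klterm_0; destruct (Rlt_dec 0 Pp); unfold Rdiv; lra].
  destruct (Rlt_dec 0 Pp) as [Hp|Hp].
  - assert (Hq : 0 < Pq) by nra.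
    rewrite !klterm_pos by exact HPa. rewrite !ln_div' by lra.
    assert (Hd : 0 < Pq / Pp) by (apply Rdiv_lt_0_compat; lra).
    pose proof (ln_le_sub1 _ Hd) as Hl. rewrite ln_div' in Hl by lra.
    assert (E : Pq / Pp - 1 = eps * ((Pa - Pp) / Pp)) by (rewrite HPq; field; lra).
    rewrite E in Hl.
    assert (Pa * (ln Pq - ln Pp) <= Pa * (eps * ((Pa - Pp) / Pp))) by
      (apply Rmult_le_compat_l; lra).
    assert (E2 : Pa * (eps * ((Pa - Pp) / Pp)) = eps * (Pa * Pa / Pp) - eps * Pa)
      by (field; lra).
    nra.
  - assert (Pp = 0) by lra. subst Pp.
    assert (Pq = eps * Pa) by lra. subst Pq.
    rewrite !klterm_pos by exact HPa.
    unfold Rdiv. rewrite Rinv_0, Rmult_0_r, ln_0.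
    replace (Pa * / ((1 - eps) * 0 + eps * Pa)) with (/ eps) by (field; lra).
    rewrite ln_Rinv by lra. lra.
Qed.

Definition pert (p : nat -> R) (a : nat) (eps : R) : nat -> R :=
  fun a' => (1 - eps) * p a' + (if Nat.eqb a' a then eps else 0).

Definition mterm nA nB P p b a : R :=
  Rsum nB (fun b0 => if Rlt_dec 0 (Pmix nA P p b b0) then 0 else P b0 b a).

Definition C2term nA nB P p b a : R :=
  Rsum nB (fun b0 => P b0 b a * P b0 b a / Pmix nA P p b b0).

Definition Xv nA nB (P : nat -> nat -> nat -> R) (W : nat -> R) r b a' : R :=
  Rsum nB (fun b0 => klterm (P b0 b a') (Pmix nA P r b b0)) + Rsum nB (fun b0 => W b0 * P b0 b a').

Lemma objective_X nA nB P W r b : objective nA nB P W r b = Rsum nA (fun a' => r a' * Xv nA nB P W r b a').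
Proof. reflexivity. Qed.

Lemma Qval_X nA nB P W r b a : Qval nA nB P r W b a = Xv nA nB P W r b a.
Proof. unfold Qval, Xv. apply Rsum_plus. Qed.

Lemma pert_dist nA p a eps : is_dist nA p -> (a < nA)%nat -> 0 < eps < 1 -> is_dist nA (pert p a eps).
Proof.
  intros [Hp0 Hp1] Ha He. split.
  - intros a' Ha'. unfold pert. specialize (Hp0 a' Ha'). destruct (Nat.eqb a' a); nra.
  - unfold pert. rewrite Rsum_plus, Rsum_scal, Hp1.
    rewrite (Rsum_delta nA a (fun _ => eps)) by exact Ha. ring.
Qed.

Lemma Pmix_pert nA P p a eps b b0 : (a < nA)%nat ->
  Pmix nA P (pert p a eps) b b0 = (1 - eps) * Pmix nA P p b b0 + eps * P b0 b a.
Proof.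
  intros Ha. unfold Pmix, pert.
  rewrite (Rsum_ext nA _ (fun a' => (1 - eps) * (P b0 b a' * p a') +
       (if Nat.eqb a' a then eps * P b0 b a' else 0))).
  - rewrite Rsum_plus, Rsum_scal.
    rewrite (Rsum_delta nA a (fun a' => eps * P b0 b a')) by exact Ha. reflexivity.
  - intros a' _. destruct (Nat.eqb_spec a' a); [subst|]; ring.
Qed.

Lemma perturb nA nB P W p b a eps : is_channel nA nB P -> (b < nB)%nat -> is_dist nA p ->
  (a < nA)%nat -> 0 < eps < 1 ->
  (1 - eps) * (objective nA nB P W p b + eps * mterm nA nB P p b a)
  + eps * (Qval nA nB P p W b a - eps * C2term nA nB P p b a - mterm nA nB P p b a * ln eps)
  <= objective nA nB P W (pert p a eps) b.
Proof.
  intros HP Hb Hp Ha He.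
  set (q := pert p a eps).
  set (m := mterm nA nB P p b a).
  set (C2 := C2term nA nB P p b a).
  assert (Hb1 : objective nA nB P W q b =
     (1 - eps) * Rsum nA (fun a' => p a' * Xv nA nB P W q b a') + eps * Xv nA nB P W q b a).
  { rewrite objective_X. set (X := Xv nA nB P W q b). unfold q, pert.
    rewrite (Rsum_ext nA _ (fun a' => (1 - eps) * (p a' * X a') +
       (if Nat.eqb a' a then eps * X a' else 0))).
    - rewrite Rsum_plus, Rsum_scal.
      rewrite (Rsum_delta nA a (fun a' => eps * X a')) by exact Ha.
      reflexivity.
    - intros a' _. destruct (Nat.eqb_spec a' a); [subst|]; ring. }
  set (Pp := fun b0 => Pmix nA P p b b0).
  set (Pa := fun b0 => P b0 b a).
  assert (Hc : objective nA nB P W p b + eps * m <= Rsum nA (fun a' => p a' * Xv nA nB P W q b a')).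
  { apply Rle_trans with (Rsum nA (fun a' => p a' * Xv nA nB P W p b a' -
        eps * Rsum nB (fun b0 => p a' * P b0 b a' * ((Pa b0 - Pp b0) / Pp b0)))).
    - rewrite Rsum_minus, Rsum_scal, <- objective_X.
      rewrite (Rsum_swap nA nB (fun a' b0 => p a' * P b0 b a' * ((Pa b0 - Pp b0) / Pp b0))).
      rewrite (Rsum_ext nB _ (fun b0 => (Pa b0 - Pp b0 - (if Rlt_dec 0 (Pmix nA P p b b0) then 0 else P b0 b a)))).
      + rewrite !Rsum_minus. fold m. unfold mterm in m.
        unfold Pa, Pp. rewrite Pmix_sum by assumption.
        destruct (HP b a Hb Ha) as [_ ->]. unfold m. lra.
      + intros b0 Hb0.
        rewrite (Rsum_ext nA _ (fun a' => ((Pa b0 - Pp b0) / Pp b0) * (P b0 b a' * p a'))) by (intros; ring).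
        rewrite Rsum_scal. fold (Pmix nA P p b b0). fold (Pp b0).
        pose proof (Pmix_nonneg nA nB P p b b0 HP Hp Hb Hb0) as Hnn. fold (Pp b0) in Hnn.
        unfold Pp in *. unfold Pa.
        destruct (Rlt_dec 0 (Pmix nA P p b b0)) as [Hl|Hl].
        * field. lra.
        * assert (E : Pmix nA P p b b0 = 0) by lra. rewrite E. ring.
    - apply Rsum_le. intros a' Ha'. unfold Xv.
      rewrite !Rmult_plus_distr_l.
      rewrite <- !Rsum_scal.
      assert (Rsum nB (fun b0 => p a' * klterm (P b0 b a') (Pmix nA P p b b0)) -
              Rsum nB (fun b0 => eps * (p a' * P b0 b a' * ((Pa b0 - Pp b0) / Pp b0)))
              <= Rsum nB (fun b0 => p a' * klterm (P b0 b a') (Pmix nA P q b b0))).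
      { rewrite <- Rsum_minus. apply Rsum_le. intros b0 Hb0.
        destruct (HP b a' Hb Ha') as [HP1 _]. destruct (HP b a Hb Ha) as [HPa1 _].
        apply pert_i.
        - apply (proj1 Hp a' Ha').
        - apply HP1, Hb0.
        - exact He.
        - apply HPa1, Hb0.
        - intros. rewrite Rmult_comm. apply (Pmix_term nA nB P p b b0 a' HP Hp Hb Hb0 Ha').
        - unfold q. apply Pmix_pert, Ha. }
      lra. }
  assert (Hd : Qval nA nB P p W b a - eps * C2 - m * ln eps <= Xv nA nB P W q b a).
  { rewrite Qval_X. unfold Xv, C2, m, C2term, mterm.
    rewrite (Rmult_comm _ (ln eps)), <- !Rsum_scal.
    cut (Rsum nB (fun b0 => klterm (P b0 b a) (Pmix nA P p b b0)) -
         Rsum nB (fun b0 => eps * (P b0 b a * P b0 b a / Pmix nA P p b b0)) -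
         Rsum nB (fun b0 => ln eps * (if Rlt_dec 0 (Pmix nA P p b b0) then 0 else P b0 b a))
         <= Rsum nB (fun b0 => klterm (P b0 b a) (Pmix nA P q b b0))).
    { intros; lra. }
    rewrite <- !Rsum_minus. apply Rsum_le. intros b0 Hb0.
    destruct (HP b a Hb Ha) as [HPa1 _].
    apply pert_ii.
    - apply HPa1, Hb0.
    - apply (Pmix_nonneg nA nB P p b b0 HP Hp Hb Hb0).
    - exact He.
    - unfold q. apply Pmix_pert, Ha. }
  rewrite Hb1.
  assert (0 < 1 - eps) by lra.
  apply Rplus_le_compat.
  - apply Rmult_le_compat_l; lra.
  - apply Rmult_le_compat_l; lra.
Qed.

Lemma key_real F m Q C2 eps L : 0 < eps < 1 -> 0 <= m ->
  (1 - eps) * (F + eps * m) + eps * (Q - eps * C2 - m * L) <= F ->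
  Q <= F + eps * C2 + m * L.
Proof.
  intros He Hm H.
  assert (E : F - ((1 - eps) * (F + eps * m) + eps * (Q - eps * C2 - m * L)) =
              eps * (F - (1 - eps) * m - Q + eps * C2 + m * L)) by ring.
  assert (H2 : 0 <= eps * (F - (1 - eps) * m - Q + eps * C2 + m * L)) by lra.
  assert (H3 : 0 <= F - (1 - eps) * m - Q + eps * C2 + m * L).
  { apply (Rmult_le_reg_l eps); lra. }
  nra.
Qed.

Lemma limit_real Q F m C2 : 0 <= m -> 0 <= C2 ->
  (forall eps, 0 < eps < 1 -> Q <= F + eps * C2 + m * ln eps) -> m = 0 /\ Q <= F.
Proof.
  intros Hm HC H.
  assert (Hm0 : m = 0).
  { destruct Hm as [Hm|Hm]; [exfalso|lra].
    set (t := Rmin 0 ((Q - F - C2) / m) - 1).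
    assert (Ht1 : Rmin 0 ((Q - F - C2) / m) <= 0) by apply Rmin_l.
    assert (Ht2 : Rmin 0 ((Q - F - C2) / m) <= (Q - F - C2) / m) by apply Rmin_r.
    assert (He : 0 < exp t < 1).
    { split; [apply exp_pos|]. rewrite <- exp_0. apply exp_increasing. unfold t; lra. }
    specialize (H (exp t) He). rewrite ln_exp in H.
    assert (m * t <= m * ((Q - F - C2) / m - 1)) by (apply Rmult_le_compat_l; unfold t; lra).
    assert (E : m * ((Q - F - C2) / m - 1) = Q - F - C2 - m) by (field; lra).
    assert (exp t * C2 <= C2) by nra.
    lra. }
  split; [exact Hm0|].
  subst m.
  destruct (Rle_dec Q F) as [|Hn]; [assumption|exfalso].
  set (d := Q - F).
  assert (Hd : 0 < d) by (unfold d; lra).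
  set (eps := d / (d + C2 + 1)).
  assert (He : 0 < eps < 1).
  { unfold eps. split. apply Rdiv_lt_0_compat; lra.
    apply (Rmult_lt_reg_r (d + C2 + 1)); [lra|]. field_simplify; lra. }
  specialize (H eps He).
  assert (eps * C2 < d).
  { unfold eps. apply (Rmult_lt_reg_r (d + C2 + 1)); [lra|].
    field_simplify; [nra|lra]. }
  unfold d in *. lra.
Qed.

Lemma attains_KKT nA nB P J W pinf : is_channel nA nB P -> is_policy nA nB pinf ->
  solves_DP nA nB P J W -> attains nA nB P J W pinf -> KKT nA nB P J W pinf.
Proof.
  intros HP Hpol HDP HA b a Hb Ha.
  set (p := fun a => pinf a b).
  assert (Hp : is_dist nA p) by (apply Hpol, Hb).
  assert (HF : objective nA nB P W p b = J + W b) by (apply HA, Hb).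
  assert (HQ : forall a, (a < nA)%nat ->
     mterm nA nB P p b a = 0 /\ Qval nA nB P p W b a <= J + W b).
  { intros a' Ha'. apply (limit_real _ _ _ (C2term nA nB P p b a')).
    - unfold mterm. apply Rsum_nonneg. intros b0 Hb0.
      destruct (Rlt_dec 0 (Pmix nA P p b b0)); [lra|].
      apply (proj1 (HP b a' Hb Ha') b0 Hb0).
    - unfold C2term. apply Rsum_nonneg. intros b0 Hb0.
      pose proof (proj1 (HP b a' Hb Ha') b0 Hb0).
      pose proof (Rinv_nonneg _ (Pmix_nonneg nA nB P p b b0 HP Hp Hb Hb0)).
      unfold Rdiv. apply Rmult_le_pos; [nra|assumption].
    - intros eps He. apply key_real with (F := J + W b) (C2 := C2term nA nB P p b a').
      + exact He.
      + unfold mterm. apply Rsum_nonneg. intros b0 Hb0.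
        destruct (Rlt_dec 0 (Pmix nA P p b b0)); [lra|].
        apply (proj1 (HP b a' Hb Ha') b0 Hb0).
      + rewrite <- HF.
        eapply Rle_trans; [apply (perturb nA nB P W p b a' eps HP Hb Hp Ha' He)|].
        rewrite HF. apply (proj1 (HDP b Hb)).
        exists (pert p a' eps). split; [apply pert_dist; assumption| reflexivity]. }
  split.
  - intros Hne.
    assert (Hs : Rsum nA (fun a' => p a' * (J + W b - Qval nA nB P p W b a')) = 0).
    { rewrite (Rsum_ext nA _ (fun a' => (J + W b) * p a' - p a' * Qval nA nB P p W b a'))
        by (intros; ring).
      rewrite Rsum_minus, Rsum_scal, (proj2 Hp), <- objective_Qval, HF. ring. }
    assert (Hnn : forall a', (a' < nA)%nat -> 0 <= p a' * (J + W b - Qval nA nB P p W b a')).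
    { intros a' Ha'. apply Rmult_le_pos. apply (proj1 Hp a' Ha').
      pose proof (proj2 (HQ a' Ha')). lra. }
    pose proof (Rsum_term_le nA _ a Hnn Ha) as Hle. rewrite Hs in Hle.
    pose proof (Hnn a Ha) as Hge.
    assert (Hz : p a * (J + W b - Qval nA nB P p W b a) = 0) by lra.
    apply Rmult_integral in Hz. destruct Hz as [Hz|Hz]; [contradiction|lra].
  - intros Hz. split; [|apply (proj2 (HQ a Ha))].
    intros b0 Hb0 HPa.
    destruct (Rlt_dec 0 (Pmix nA P p b b0)) as [Hl|Hl]; [exact Hl|exfalso].
    pose proof (proj1 (HQ a Ha)) as Hm. unfold mterm in Hm.
    pose proof (Rsum_term_le nB (fun b0 => if Rlt_dec 0 (Pmix nA P p b b0) then 0 else P b0 b a) b0)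
      as Ht.
    simpl in Ht.
    assert (Hnn : forall i, (i < nB)%nat -> 0 <= (if Rlt_dec 0 (Pmix nA P p b i) then 0 else P i b a)).
    { intros i Hi. destruct (Rlt_dec 0 (Pmix nA P p b i)); [lra|].
      apply (proj1 (HP b a Hb Ha) i Hi). }
    specialize (Ht Hnn Hb0). rewrite Hm in Ht.
    destruct (Rlt_dec 0 (Pmix nA P p b b0)); [contradiction|lra].
Qed.

Theorem mainTheorem7
  (nA nB : nat) (HnA : (0 < nA)%nat) (HnB : (0 < nB)%nat)
  (P : nat -> nat -> nat -> R) (HP : is_channel nA nB P)
  (Vt : nat -> nat -> R) (HVt : is_finite_horizon_values nA nB P Vt)
  (V : nat -> R) (J : R)
  (Hlim : forall b, (b < nB)%nat -> Un_cv (fun t => Vt t b - INR t * J) (V b))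
  (HDP : solves_DP nA nB P J V)
  (pinf : nat -> nat -> R) (Hpinf : is_policy nA nB pinf) :
  ((exists W, solves_DP nA nB P J W /\ attains nA nB P J W pinf)
     <-> (exists W, KKT nA nB P J W pinf))
  /\ (forall W, KKT nA nB P J W pinf ->
        solves_DP nA nB P J W /\ attains nA nB P J W pinf).
Proof.
  split; [split|].
  - intros [W [HW HA]]. exists W. apply attains_KKT; assumption.
  - intros [W HK]. exists W. apply kkt_implies; assumption.
  - intros W HK. apply kkt_implies; assumption.
Qed.
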